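(* For each $c>0$ let $\alpha_c,\beta_c,\gamma:\mathbb{R}^n\times\mathbb{S}^m\to\mathbb{R}$ satisfy conditions (a)–(e) below, and let $\mathcal{A}_c(x,\Lambda):=f(x)+\alpha_c(x,\Lambda)\,\varphi(G(x),\beta_c(x,\Lambda)\Lambda)+\gamma(x,\Lambda)$ with $\varphi(Y,Z)=\|P(Z/2-Y)\|_F^2-\|Z\|_F^2/4$. Conditions: (a) $\alpha_c,\beta_c,\gamma$ are continuously differentiable for all $c>0$; (b) $\alpha_c(x,\Lambda)>0$ for all $x$ feasible for (NSDP), all $\Lambda$, all $c>0$; and for every KKT pair $(\bar x,\bar\Lambda)$ of (NSDP): (c) $\alpha_c(\bar x,\bar\Lambda)\beta_c(\bar x,\bar\Lambda)=1$ for all $c>0$; (d) $\gamma(\bar x,\bar\Lambda)=0$, $\nabla_x\gamma(\bar x,\bar\Lambda)=0$, $\nabla_\Lambda\gamma(\bar x,\bar\Lambda)=0$; (e) there exist neighborhoods $V_{\bar x}$, $V_{\bar\Lambda}$ of $\bar x,\bar\Lambda$ and a continuous $\Gamma:V_{\bar x}\to V_{\bar\Lambda}$ with $\Gamma(\bar x)=\bar\Lambda$ and $\gamma(x,\Gamma(x))=0$ for all $x\in V_{\bar x}$. Assume moreover that $G_{\mathrm{NSDP}}\neq\emptyset$, that $G_{\mathrm{NLP}}(c)\neq\emptyset$ for all $c>0$, and that for every $x\in G_{\mathrm{NSDP}}$ there is at least one $\Lambda\in\mathbb{S}^m$ such that $(x,\Lambda)$ is a KKT pair of (NSDP). Then for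 every $c>0$, $G_{\mathrm{NLP}}(c)\subseteq\tilde G_{\mathrm{NSDP}}$ implies $G_{\mathrm{NLP}}(c)=\tilde G_{\mathrm{NSDP}}$.
   Context: $\mathbb{S}^m$ is the space of real symmetric $m\times m$ matrices with inner product $\langle Y,Z\rangle=\operatorname{tr}(YZ)$ and Frobenius norm; $\mathbb{S}^m_+$ is the PSD cone and $P$ the orthogonal projection onto it. $f:\mathbb{R}^n\to\mathbb{R}$, $G:\mathbb{R}^n\to\mathbb{S}^m$ are twice continuously differentiable; (NSDP) is: minimize $f(x)$ s.t. $G(x)\in\mathbb{S}^m_+$. $\nabla G(x)^*Z=(\langle\partial G(x)/\partial x_i,Z\rangle)_{i=1}^n$; $L(x,\Lambda)=f(x)-\langle G(x),\Lambda\rangle$. With $Y\circ Z=(YZ+ZY)/2$, $(x,\Lambda)$ is a KKT pair of (NSDP) if $\nabla f(x)-\nabla G(x)^*\Lambda=0$, $\Lambda\circ G(x)=0$, $G(x)\in\mathbb{S}^m_+$, $\Lambda\in\mathbb{S}^m_+$; then $\Lambda$ is called a Lagrange multiplier corresponding to $x$. $G_{\mathrm{NSDP}}$ is the set of global minimizers of (NSDP); $G_{\mathrm{NLP}}(c)$ is the set of global minimizers of $\mathcal{A}_c$ over $\mathbb{R}^n\times\mathbb{S}^m$; $\tilde G_{\mathrm{NSDP}}:=\{(x,\Lambda): x\in G_{\mathrm{NSDP}}\text{ and }\Lambda\text{ is a corresponding Lagrange multiplier}\}$. *)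

(* Defs.v *)
From HB Require Import structures.
From mathcomp Require Import all_boot all_order all_algebra.
From mathcomp Require Import all_classical all_reals all_analysis.
Set Implicit Arguments. Unset Strict Implicit. Unset Printing Implicit Defensive.
Import Order.TTheory GRing.Theory Num.Theory.
Import numFieldNormedType.Exports.
Local Open Scope classical_set_scope.
Local Open Scope ring_scope.

Section Defs.
Variable R : realType.

Definition C1 {V W : normedModType R} (f : V -> W) : Prop :=
  (forall x, differentiable f x) /\ (forall v : V, continuous ('D_v f)).

Definition C2 {V W : normedModType R} (f : V -> W) : Prop :=
  C1 f /\ (forall v : V, C1 ('D_v f)).

Variable m : nat.

Definition symmx (A : 'M[R]_m) : Prop := A^T = A.
Definition symz (A : 'M[R]_m) : 'M[R]_m := 2^-1 *: (A + A^T).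
Definition mxip (Y Z : 'M[R]_m) : R := \tr (Y *m Z).
Definition frob2 (Y : 'M[R]_m) : R := \sum_i \sum_j (Y i j) ^+ 2.
Definition psd (A : 'M[R]_m) : Prop :=
  symmx A /\ forall v : 'cV[R]_m, 0 <= (v^T *m A *m v) 0 0.
Definition projPSD (Y : 'M[R]_m) : 'M[R]_m :=
  xget 0 [set Z | psd Z /\ forall W, psd W -> frob2 (Y - Z) <= frob2 (Y - W)].
Definition jprod (Y Z : 'M[R]_m) : 'M[R]_m := 2^-1 *: (Y *m Z + Z *m Y).
Definition phi (Y Z : 'M[R]_m) : R :=
  frob2 (projPSD (2^-1 *: Z - Y)) - frob2 Z / 4.

Variable n : nat.

Definition KKT (f : 'rV[R]_n -> R) (G : 'rV[R]_n -> 'M[R]_m)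
    (x : 'rV[R]_n) (L : 'M[R]_m) : Prop :=
  (forall i : 'I_n,
     'D_(delta_mx 0 i) f x - mxip ('D_(delta_mx 0 i) G x) L = 0)
  /\ jprod L (G x) = 0 /\ psd (G x) /\ psd L.

Definition G_NSDP (f : 'rV[R]_n -> R) (G : 'rV[R]_n -> 'M[R]_m)
  : set 'rV[R]_n :=
  [set x | psd (G x) /\ forall y, psd (G y) -> f x <= f y].

Definition tG_NSDP (f : 'rV[R]_n -> R) (G : 'rV[R]_n -> 'M[R]_m)
  : set ('rV[R]_n * 'M[R]_m) :=
  [set p | G_NSDP f G p.1 /\ KKT f G p.1 p.2].

Definition Ac (f : 'rV[R]_n -> R) (G : 'rV[R]_n -> 'M[R]_m)
    (alpha beta gamma : 'rV[R]_n * 'M[R]_m -> R)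
    (p : 'rV[R]_n * 'M[R]_m) : R :=
  f p.1 + alpha p * phi (G p.1) (beta p *: p.2) + gamma p.

Definition G_NLP (A : 'rV[R]_n * 'M[R]_m -> R)
  : set ('rV[R]_n * 'M[R]_m) :=
  [set p | symmx p.2 /\ forall q, symmx q.2 -> A p <= A q].

(** restriction of a function on R^n x M_m to R^n x S^m, composed with
    the projection onto S^m (used to express smoothness / gradients on
    R^n x S^m). *)
Definition onSym (h : 'rV[R]_n * 'M[R]_m -> R) : 'rV[R]_n * 'M[R]_m -> R :=
  fun p => h (p.1, symz p.2).

End Defs.

(* Main.v *)
Require Import Defs.
From HB Require Import structures.
From mathcomp Require Import all_boot all_order all_algebra.
From mathcomp Require Import all_classical all_reals all_analysis.
From mathcomp Require Import ring lra zify.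
Import Order.TTheory GRing.Theory Num.Theory.
Import numFieldNormedType.Exports.
Local Open Scope classical_set_scope.
Local Open Scope ring_scope.

Section Fejer.
Variable R : realType.
Variable m : nat.
Local Notation M := 'M[R]_m.

Definition qf (A : M) (x : 'I_m -> R) := \sum_i \sum_j x i * A i j * x j.
Definition fip (A B : M) := \sum_i \sum_j A i j * B i j.

Lemma qfE (A : M) (v : 'cV[R]_m) : (v^T *m A *m v) 0 0 = qf A (fun i => v i 0).
Proof.
rewrite /qf mxE. under eq_bigr => j _ do rewrite mxE big_distrl /=.
rewrite exchange_big /=; apply: eq_bigr => i _; apply: eq_bigr => j _.
by rewrite mxE.
Qed.

Lemma psd_qf A : psd A -> forall x, 0 <= qf A x.
Proof.
move=> [_ H] x; have := H (\col_i x i); rewrite qfE.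
have -> // : (fun i => (\col_i0 x i0) i 0) = x by apply/funext => i; rewrite mxE.
Qed.

Lemma qf_psd A : symmx A -> (forall x, 0 <= qf A x) -> psd A.
Proof. by move=> sA H; split => // v; rewrite qfE. Qed.

Lemma sum_deltal p t (F : 'I_m -> R) :
  \sum_i (if i == p then t else 0) * F i = t * F p.
Proof.
rewrite (bigD1 p) //= eqxx big1 ?addr0 // => i /negbTE ->; by rewrite mul0r.
Qed.

Lemma sum_deltar p t (F : 'I_m -> R) :
  \sum_i F i * (if i == p then t else 0) = F p * t.
Proof.
rewrite (bigD1 p) //= eqxx big1 ?addr0 // => i /negbTE ->; by rewrite mulr0.
Qed.

Lemma symE {A : M} i j : symmx A -> A i j = A j i.
Proof. by move=> sA; rewrite -{1}sA mxE. Qed.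

Lemma qf_shift (A : M) x p t : symmx A ->
  qf A (fun i => x i + (if i == p then t else 0)) =
  qf A x + 2 * t * (\sum_j A p j * x j) + t ^+ 2 * A p p.
Proof.
move=> sA; rewrite /qf.
under eq_bigr => i _ do under eq_bigr => j _ do rewrite mulrDr !mulrDl.
under eq_bigr => i _ do rewrite !big_split /=.
rewrite !big_split /=.
have hb : \sum_i \sum_j (if i == p then t else 0) * A i j * x j
    = t * \sum_j A p j * x j.
  under eq_bigr => i _ do (under eq_bigr => j _ do rewrite -mulrA; rewrite -mulr_sumr).
  by rewrite sum_deltal.
have hc : \sum_i \sum_j x i * A i j * (if j == p then t else 0)
    = t * \sum_j A p j * x j.
  under eq_bigr => i _ do rewrite sum_deltar.
  rewrite mulr_sumr; apply: eq_bigr => i _; rewrite (symE i p sA); ring.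
have hd : \sum_i \sum_j (if i == p then t else 0) * A i j * (if j == p then t else 0)
    = t ^+ 2 * A p p.
  under eq_bigr => i _ do rewrite sum_deltar.
  under eq_bigr => i _ do rewrite -mulrA.
  rewrite sum_deltal; ring.
rewrite hb hc hd; ring.
Qed.

Lemma qf0 (A : M) : qf A (fun _ => 0) = 0.
Proof. by rewrite /qf big1 // => i _; rewrite big1 // => j _; rewrite !mul0r. Qed.

Lemma psd_diag (A : M) p : psd A -> 0 <= A p p.
Proof.
move=> pA; have := psd_qf _ pA (fun i => 0 + (if i == p then 1 else 0)).
rewrite qf_shift ?qf0; last by case: pA.
under eq_bigr => j _ do rewrite mulr0.
rewrite big1_eq; lra.
Qed.

Lemma zero_pivot (A : M) p : psd A -> A p p = 0 -> forall j, A p j = 0.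
Proof.
move=> pA A0 j; have sA : symmx A by case: pA.
set x := fun j => A p j.
set s := \sum_j A p j * x j.
have s0 : 0 <= s by apply: sumr_ge0 => i _; rewrite /x -expr2 sqr_ge0.
have sle : s <= 0.
  rewrite leNgt; apply/negP => sgt.
  have := psd_qf _ pA (fun i => x i + (if i == p then - ((qf A x + 1) / (2 * s)) else 0)).
  rewrite qf_shift // A0 -/s mulr0 addr0.
  have -> : 2 * - ((qf A x + 1) / (2 * s)) * s = - (qf A x + 1).
    by field; rewrite gt_eqF.
  lra.
have s00 : s = 0 by lra.
have : \sum_j A p j ^+ 2 = s by apply: eq_bigr => i _; rewrite expr2.
rewrite s00 => /psumr_eq0P H; apply/eqP; rewrite -sqrf_eq0; apply/eqP; apply: H => // i _; apply: sqr_ge0.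
Qed.

Lemma fejer_aux d : forall A : M, psd A ->
  (forall i j : 'I_m, (i < m - d)%N -> A i j = 0) -> forall W, psd W -> 0 <= fip A W.
Proof.
elim: d => [|d IH] A pA hA W pW.
  rewrite /fip big1 // => i _; rewrite big1 // => j _.
  by rewrite hA ?mul0r // subn0 ltn_ord.
have sA : symmx A by case: pA.
case: (ltnP d m) => hd; last first.
  by apply: IH => // i j hi; apply: hA; lia.
have kp : (m - d.+1 < m)%N by lia.
set p := Ordinal kp.
have App := psd_diag _ p pA.
have [A0|Anz] := eqVneq (A p p) 0.
  apply: IH => // i j hi; case: (ltnP i (m - d.+1)) => hik; first by apply: hA.
  have -> : i = p by apply/val_inj => /=; lia.
  exact: zero_pivot.
have Apos : 0 < A p p by rewrite lt_neqAle eq_sym Anz.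
pose A' : M := \matrix_(i, j) (A i j - A i p * A p j / A p p).
have eq : fip A W = fip A' W + qf W (fun i => A i p) / A p p.
  rewrite /fip /qf mulr_suml -big_split; apply: eq_bigr => i _.
  rewrite mulr_suml -big_split; apply: eq_bigr => j _.
  rewrite mxE (symE j p sA) /=; ring.
have pA' : psd A'.
  apply: qf_psd.
    apply/matrixP => i j; rewrite !mxE (symE j i sA) (symE j p sA) (symE p i sA); ring.
  move=> x; set s := \sum_j A p j * x j.
  have e1 : qf A' x = qf A x - s * s / A p p.
    have e2 : \sum_i x i * A i p = s.
      by apply: eq_bigr => i _; rewrite (symE i p sA) mulrC.
    have e3 : (\sum_i x i * A i p) * s = \sum_i \sum_j (x i * A i p) * (A p j * x j).
      by rewrite big_distrl; apply: eq_bigr => i _; rewrite /= /s mulr_sumr.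
    rewrite -{1}e2 e3 mulr_suml /qf -sumrB; apply: eq_bigr => i _.
    rewrite mulr_suml -sumrB; apply: eq_bigr => j _; rewrite mxE /=; ring.
  rewrite e1.
  have := psd_qf _ pA (fun i => x i + (if i == p then - (s / A p p) else 0)).
  rewrite qf_shift // -/s.
  have -> : qf A x + 2 * - (s / A p p) * s + (- (s / A p p)) ^+ 2 * A p p
          = qf A x - s * s / A p p by field.
  by [].
have hA' : forall i j : 'I_m, (i < m - d)%N -> A' i j = 0.
  move=> i j hi; rewrite mxE; case: (ltnP i (m - d.+1)) => hik.
    by rewrite (hA i j) // (hA i p) // !mul0r subr0.
  have -> : i = p by apply/val_inj => /=; lia.
  by field.
rewrite eq; apply: addr_ge0; first exact: IH.
by apply: divr_ge0 => //; apply: psd_qf.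
Qed.

Lemma fejer (A W : M) : psd A -> psd W -> 0 <= fip A W.
Proof. by move=> pA pW; apply: (fejer_aux m) => // i j; rewrite subnn. Qed.

Lemma sum4 (F G H K : 'I_m -> 'I_m -> R) :
  \sum_i \sum_j F i j + 2 * \sum_i \sum_j G i j - \sum_i \sum_j H i j
    + \sum_i \sum_j K i j
  = \sum_i \sum_j (F i j + 2 * G i j - H i j + K i j).
Proof.
rewrite mulr_sumr -big_split -sumrB -big_split; apply: eq_bigr => i _ /=.
by rewrite mulr_sumr -big_split -sumrB -big_split.
Qed.

Lemma fipZr (A B : M) c : fip A (c *: B) = c * fip A B.
Proof.
rewrite /fip mulr_sumr; apply: eq_bigr => i _; rewrite mulr_sumr.
by apply: eq_bigr => j _; rewrite mxE; ring.
Qed.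

Lemma fipC (A B : M) : fip A B = fip B A.
Proof. by apply: eq_bigr => i _; apply: eq_bigr => j _; rewrite mulrC. Qed.

Lemma frob2_ge0 (A : M) : 0 <= frob2 A.
Proof. by apply: sumr_ge0 => i _; apply: sumr_ge0 => j _; apply: sqr_ge0. Qed.

Lemma frob2_0 : frob2 (0 : M) = 0.
Proof. by rewrite /frob2 big1 // => i _; rewrite big1 // => j _; rewrite mxE expr0n. Qed.

Lemma frob2_eq0 (A : M) : frob2 A <= 0 -> A = 0.
Proof.
move=> h; have h0 : frob2 A = 0 by apply/le_anti; rewrite h frob2_ge0.
apply/matrixP => i j; rewrite mxE.
move/psumr_eq0P: h0 => /(_ (fun i _ => sumr_ge0 _ (fun j _ => sqr_ge0 (A i j))) i isT).
move/psumr_eq0P => /(_ (fun j _ => sqr_ge0 (A i j)) j isT) /eqP.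
by rewrite sqrf_eq0 => /eqP.
Qed.

Lemma frob2Z (A : M) c : frob2 (c *: A) = c ^+ 2 * frob2 A.
Proof.
rewrite /frob2 mulr_sumr; apply: eq_bigr => i _; rewrite mulr_sumr.
by apply: eq_bigr => j _; rewrite mxE; ring.
Qed.

Lemma psd_scale (A : M) c : 0 <= c -> psd A -> psd (c *: A).
Proof.
move=> c0 pA; have sA : symmx A by case: pA.
apply: qf_psd.
  by apply/matrixP => i j; rewrite !mxE (symE i j sA).
move=> x; have -> : qf (c *: A) x = c * qf A x.
  rewrite /qf mulr_sumr; apply: eq_bigr => i _; rewrite mulr_sumr.
  by apply: eq_bigr => j _; rewrite mxE; ring.
by apply: mulr_ge0 => //; apply: psd_qf.
Qed.

Lemma phi0 (Y Z : M) : psd Y -> psd Z -> fip Y Z = 0 -> phi Y Z = 0.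
Proof.
move=> pY pZ hYZ.
set P0 := 2^-1 *: Z.
have key : forall W, frob2 (P0 - Y - W) = frob2 Y + 2 * fip Y W - fip Y Z + frob2 (W - P0).
  move=> W; rewrite /frob2 /fip sum4; apply: eq_bigr => i _; apply: eq_bigr => j _.
  by rewrite !mxE /=; field.
have fP0 : fip Y P0 = 0 by rewrite fipZr hYZ mulr0.
have pP0 : psd P0 by apply: psd_scale => //; rewrite invr_ge0.
pose S := [set Q : M | psd Q /\ forall W, psd W -> frob2 (P0 - Y - Q) <= frob2 (P0 - Y - W)].
have SP0 : S P0.
  rewrite /S /=; split => // W1 pW1; rewrite !key subrr frob2_0 fP0 hYZ.
  have := fejer _ _ pY pW1; have := frob2_ge0 (W1 - P0); lra.
have uniq : forall Q, S Q -> Q = P0.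
  move=> Q [pQ HQ]; have := HQ P0 pP0; rewrite !key subrr frob2_0 fP0.
  have := fejer _ _ pY pQ => h1 h2.
  have : frob2 (Q - P0) <= 0 by lra.
  by move/frob2_eq0/eqP; rewrite subr_eq0 => /eqP.
rewrite /phi.
have -> : projPSD (2^-1 *: Z - Y) = P0.
  by apply: uniq; apply: xgetPex; exists P0.
by rewrite /P0 frob2Z; field.
Qed.

Lemma mxip_fip (A B : M) : symmx B -> mxip A B = fip A B.
Proof.
move=> sB; rewrite /mxip /fip /mxtrace; apply: eq_bigr => i _; rewrite mxE.
by apply: eq_bigr => j _; rewrite (symE j i sB).
Qed.

Lemma jprod_ip (L Y : M) : jprod L Y = 0 -> mxip L Y = 0.
Proof.
move=> h; have : \tr (jprod L Y) = 0 by rewrite h mxtrace0.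
rewrite /jprod mxtraceZ mxtraceD (mxtrace_mulC Y L) /mxip; lra.
Qed.

End Fejer.

Theorem lemma3p7 (R : realType) (n m : nat)
  (f : 'rV[R]_n -> R) (G : 'rV[R]_n -> 'M[R]_m)
  (alpha beta : R -> 'rV[R]_n * 'M[R]_m -> R)
  (gamma : 'rV[R]_n * 'M[R]_m -> R) :
  (* standing assumptions: f, G are C^2, G takes values in S^m *)
  C2 f -> C2 G -> (forall x, symmx (G x)) ->
  (* (a) *)
  (forall c, 0 < c -> C1 (onSym (alpha c)) /\ C1 (onSym (beta c))) ->
  C1 (onSym gamma) ->
  (* (b) *)
  (forall x L c, psd (G x) -> symmx L -> 0 < c -> 0 < alpha c (x, L)) ->
  (* (c)-(e), at every KKT pair *)
  (forall xb Lb, KKT f G xb Lb ->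
     (forall c, 0 < c -> alpha c (xb, Lb) * beta c (xb, Lb) = 1)
     /\ gamma (xb, Lb) = 0
     /\ (forall v : 'rV[R]_n, 'D_v (fun x => gamma (x, Lb)) xb = 0)
     /\ (forall H : 'M[R]_m, 'D_H (fun L => gamma (xb, symz L)) Lb = 0)
     /\ (exists (Vx : set 'rV[R]_n) (VL : set 'M[R]_m)
                (Gam : 'rV[R]_n -> 'M[R]_m),
           nbhs xb Vx /\ nbhs Lb VL /\
           {within Vx, continuous Gam} /\
           (forall x, Vx x -> VL (Gam x) /\ symmx (Gam x)) /\
           Gam xb = Lb /\
           (forall x, Vx x -> gamma (x, Gam x) = 0))) ->
  G_NSDP f G !=set0 ->
  (forall c, 0 < c -> G_NLP (Ac f G (alpha c) (beta c) gamma) !=set0) ->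
  (forall x, G_NSDP f G x -> exists L, KKT f G x L) ->
  forall c, 0 < c ->
    G_NLP (Ac f G (alpha c) (beta c) gamma) `<=` tG_NSDP f G ->
    G_NLP (Ac f G (alpha c) (beta c) gamma) = tG_NSDP f G.
Proof.
move=> _ _ symG _ _ hb hkkt _ hne _ c cpos sub.
have AcK : forall x L, KKT f G x L -> Ac f G (alpha c) (beta c) gamma (x, L) = f x.
  move=> x L hK; have [hab [hg _]] := hkkt x L hK.
  case: hK => [_ [hj [pG pL]]].
  have sL : symmx L by case: pL.
  have ha := hb x L c pG sL cpos.
  have hbeta : beta c (x, L) = (alpha c (x, L))^-1.
    by rewrite -[beta c (x, L)]mul1r -(mulVf (lt0r_neq0 ha)) -mulrA (hab c cpos) mulr1.
  have ph : phi (G x) (beta c (x, L) *: L) = 0.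
    apply: phi0 => //.
      by apply: psd_scale => //; rewrite hbeta invr_ge0 ltW.
    by rewrite fipZr fipC -mxip_fip // jprod_ip // mulr0.
  by rewrite /Ac /= ph hg mulr0 !addr0.
apply/seteqP; split => //.
move=> [x' L'] [[pGx' minx'] hK'].
have [[x0 L0] h0] := hne c cpos.
have [[pGx0 minx0] hK0] := sub _ h0.
case: h0 => [sL0 min0].
split; first by case: hK' => [_ [_ [_ [sL' _]]]].
move=> q sq; rewrite (AcK _ _ hK').
have := min0 q sq; rewrite (AcK _ _ hK0) /=.
have -> : f x' = f x0 by apply/le_anti; rewrite minx' //= minx0.
by [].
Qed.
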